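(* Let $M$ be a finite message set, let $\Sigma$ be an ambiguous experiment with message set $M$, and let $\tau: M \to \Delta(A)$ be a receiver strategy with $\tau \in BR(\Sigma)$. For each $\sigma \in \Sigma$ define the canonical experiment $\sigma^{*}: \Omega \to \Delta(A)$ by $\sigma^{*}(a\mid\omega) = \sum_{m \in M} \sigma(m\mid\omega)\tau(a\mid m)$, and let $\Sigma^{*} = \{\sigma^{*} : \sigma \in \Sigma\}$. Then $\Sigma^{*}$ is a canonical ambiguous experiment (a nonempty closed convex set of canonical experiments), it is obedient, i.e. $\tau^{*} \in BR(\Sigma^{*})$, and $u_i(\sigma, \tau) = u_i(\sigma^{*}, \tau^{*})$ for all $i \in \{s, r\}$ and all $\sigma \in \Sigma$.
   Context: Setting: $\Omega$ is a finite set of states, $A$ a finite set of receiver actions. Sender and receiver share a set of priors $P \subseteq \Delta(\Omega)$, nonempty, closed and convex; both have maxmin expected utility preferences. Payoffs are $u_s, u_r : A \times \Omega \to \mathbb{R}$. A statistical experiment with finite message set $M$ is a map $\sigma: \Omega \to \Delta(M)$, written $\sigma(m\mid\omega)$. A receiver strategy is $\tau: M \to \Delta(A)$, written $\tau(a\mid m)$. For $p \in P$ and $i \in \{s,r\}$, $u_i(p,\sigma,\tau) = \sum_{\omega,m,a} p(\omega)\sigma(m\mid\omega)\tau(a\mid m)u_i(a,\omega)$ and $u_i(\sigma,\tau) = \min_{p\in P} u_i(p,\sigma,\tau)$. An ambiguous experiment is a nonempty closed convex set $\Sigma$ of statistical experiments with a common finite message set $M$; $U_i(\Sigma,\tau)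 = \min_{\sigma \in \Sigma} u_i(\sigma,\tau)$. Best responses: $BR(\sigma) = \arg\max_{\tau} u_r(\sigma,\tau)$ and $BR(\Sigma) = \arg\max_{\tau} U_r(\Sigma,\tau)$, maximizing over all strategies $\tau: M \to \Delta(A)$. An experiment is canonical if its message set is $M = A$. The obedient strategy $\tau^{*}: A \to \Delta(A)$ is $\tau^{*}(a\mid a) = 1$ for all $a \in A$. A canonical (ambiguous) experiment is obedient if $\tau^{*}$ is a best response to it. *)

(* Defs.v *)
From mathcomp Require Import all_boot all_order all_algebra.
From mathcomp Require Import all_classical all_reals all_analysis.
Set Implicit Arguments. Unset Strict Implicit. Unset Printing Implicit Defensive.
Import Order.TTheory GRing.Theory Num.Theory.
Import numFieldNormedType.Exports.
Local Open Scope classical_set_scope.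
Local Open Scope ring_scope.

Section Persuasion.
Variables (R : realType) (Omega A : finType).

Definition is_dist (X : finType) (p : X -> R) : Prop :=
  (forall x, 0 <= p x) /\ \sum_(x : X) p x = 1.

(* Topologies: pointwise (= product = Euclidean, the domains being finite). *)
Definition ptws_space (X : finType) := {ptws X -> R}.
Definition ptws_space2 (X Y : finType) := {ptws X -> ptws_space Y}.

Definition prior_set (P : set (Omega -> R)) : Prop :=
  P !=set0 /\ @closed (ptws_space Omega) P /\
  @convex_set R (Omega -> R) P /\ P `<=` (@is_dist Omega).

Definition is_experiment (M : finType) (s : Omega -> M -> R) : Prop :=
  forall w, is_dist (s w).

Definition is_strategy (M : finType) (t : M -> A -> R) : Prop :=
  forall m, is_dist (t m).

Definition ambiguous_experiment (M : finType) (S : set (Omega -> M -> R)) : Prop :=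
  S !=set0 /\ @closed (ptws_space2 Omega M) S /\
  @convex_set R (Omega -> M -> R) S /\ S `<=` (@is_experiment M).

Definition eu (M : finType) (u : A -> Omega -> R) (p : Omega -> R)
    (s : Omega -> M -> R) (t : M -> A -> R) : R :=
  \sum_(w : Omega) \sum_(m : M) \sum_(a : A) p w * s w m * t m a * u a w.

(* u_i(sigma, tau) = min_{p in P} u_i(p, sigma, tau)  (min = inf, attained) *)
Definition uP (M : finType) (P : set (Omega -> R)) (u : A -> Omega -> R)
    (s : Omega -> M -> R) (t : M -> A -> R) : R :=
  inf [set eu u p s t | p in P].

Definition USig (M : finType) (P : set (Omega -> R)) (S : set (Omega -> M -> R))
    (u : A -> Omega -> R) (t : M -> A -> R) : R :=
  inf [set uP P u s t | s in S].

Definition best_response (M : finType) (P : set (Omega -> R))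
    (S : set (Omega -> M -> R)) (ur : A -> Omega -> R) (t : M -> A -> R) : Prop :=
  is_strategy t /\
  forall t' : M -> A -> R, is_strategy t' -> USig P S ur t' <= USig P S ur t.

Definition canonical_exp (M : finType) (s : Omega -> M -> R) (t : M -> A -> R)
    : Omega -> A -> R :=
  fun w a => \sum_(m : M) s w m * t m a.

Definition obedient : A -> A -> R := fun a b => if a == b then 1 else 0.

End Persuasion.

(* Main.v *)
Require Import Defs.
From mathcomp Require Import all_boot all_order all_algebra.
From mathcomp Require Import all_classical all_reals all_analysis.
Import Order.TTheory GRing.Theory Num.Theory.
Import numFieldNormedType.Exports.
Local Open Scope classical_set_scope.
Local Open Scope ring_scope.

Lemma prod_cvg (I : eqType) (K : I -> topologicalType)
  (F : set_system (prod_topology K)) (f : prod_topology K) :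
  Filter F -> (forall i, (fun g : prod_topology K => g i) @ F --> f i) -> F --> f.
Proof.
move=> FF h; apply/cvg_sup => i.
have surj : (fun g : prod_topology K => g i) @` setT = setT.
  rewrite predeqE => y; split => // _.
  by exists (dfwith f i y) => //; rewrite dfwithin.
apply/cvg_image => //.
move=> B /h /= FB; exists ((fun g : prod_topology K => g i) @^-1` B) => //.
by rewrite image_preimage.
Qed.

Section S.
Variables (R : realType) (Omega A M : finType).

Definition comp_st (t : M -> A -> R) (t' : A -> A -> R) : M -> A -> R :=
  fun m b => \sum_a t m a * t' a b.

Lemma eu_canon (u : A -> Omega -> R) p (s : Omega -> M -> R) t t' :
  eu u p (canonical_exp s t) t' = eu u p s (comp_st t t').
Proof.
rewrite /eu /canonical_exp /comp_st; apply: eq_bigr => w _.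
transitivity (\sum_(a : A) \sum_(b : A) \sum_(m : M) p w * s w m * t m a * t' a b * u b w).
  apply: eq_bigr => a _; apply: eq_bigr => b _.
  rewrite mulr_sumr !mulr_suml; apply: eq_bigr => m _; by rewrite !mulrA.
rewrite exchange_big /=.
under eq_bigr do rewrite exchange_big /=.
rewrite exchange_big /=; apply: eq_bigr => m _.
apply: eq_bigr => b _.
rewrite mulr_sumr mulr_suml; apply: eq_bigr => a _.
by rewrite !mulrA.
Qed.
Lemma comp_obedient (t : M -> A -> R) : comp_st t (@obedient R A) = t.
Proof.
apply/funext => m; apply/funext => b; rewrite /comp_st /obedient.
rewrite (bigD1 b) //= eqxx mulr1 big1 ?addr0 // => a /negbTE ->.
by rewrite mulr0.
Qed.

Lemma comp_strategy (t : M -> A -> R) (t' : A -> A -> R) :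
  is_strategy t -> is_strategy t' -> is_strategy (comp_st t t').
Proof.
move=> ht ht' m; split.
  move=> b; apply: sumr_ge0 => a _; apply: mulr_ge0; [exact: (ht m).1|exact: (ht' a).1].
rewrite /comp_st exchange_big /=.
under eq_bigr do rewrite -mulr_sumr (ht' _).2 mulr1.
exact: (ht m).2.
Qed.

Lemma canon_experiment (s : Omega -> M -> R) (t : M -> A -> R) :
  is_experiment s -> is_strategy t -> is_experiment (canonical_exp s t).
Proof.
move=> hs ht w; split.
  move=> b; apply: sumr_ge0 => a _; apply: mulr_ge0; [exact: (hs w).1|exact: (ht a).1].
rewrite /canonical_exp exchange_big /=.
under eq_bigr do rewrite -mulr_sumr (ht _).2 mulr1.
exact: (hs w).2.
Qed.

Lemma obedient_strategy : is_strategy (@obedient R A).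
Proof.
move=> a; split; first by move=> b; rewrite /obedient; case: ifP.
rewrite (bigD1 a) //= /obedient eqxx big1 ?addr0 // => b.
by rewrite eq_sym => /negbTE ->.
Qed.

Lemma uP_canon P u (s : Omega -> M -> R) (t : M -> A -> R) (t' : A -> A -> R) :
  uP P u (canonical_exp s t) t' = uP P u s (comp_st t t').
Proof.
rewrite /uP; congr inf; apply/seteqP; split => x [p Pp <-]; exists p => //;
by rewrite eu_canon.
Qed.

Lemma canon_convex (S : set (Omega -> M -> R)) (t : M -> A -> R) :
  @convex_set R (Omega -> M -> R) S ->
  @convex_set R (Omega -> A -> R) [set canonical_exp s t | s in S].
Proof.
move=> cS x y l /set_mem [s1 S1 <-] /set_mem [s2 S2 <-].
apply/mem_set; exists (@conv R (convex_lmodType (Omega -> M -> R)) l s1 s2); first by apply/set_mem; apply: cS; apply/mem_set.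
apply/funext => w; apply/funext => a.
rewrite /canonical_exp /=.
have cE (X : finType) (f g : Omega -> X -> R) :
  @conv R (convex_lmodType (Omega -> X -> R)) l f g = l%:num *: f + (1 - l%:num) *: g by [].
rewrite !cE /=.
transitivity (\sum_m (l%:num * s1 w m + (1 - l%:num) * s2 w m) * t m a) => //.
transitivity (l%:num * \sum_m s1 w m * t m a + (1 - l%:num) * \sum_m s2 w m * t m a); last by [].
rewrite !mulr_sumr -big_split /=; apply: eq_bigr => m _.
by rewrite mulrDl !mulrA.
Qed.
Lemma canon_cont (X : finType) (t : M -> X -> R) :
  continuous (fun s : ptws_space2 R Omega M => (canonical_exp s t : ptws_space2 R Omega X)).
Proof.
move=> s; apply: prod_cvg => [|w]; first by repeat apply: fmap_filter; exact: nbhs_filter.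
apply: prod_cvg => [|a /=]; first by repeat apply: fmap_filter; exact: nbhs_filter.
change ((fun s0 : ptws_space2 R Omega M => \sum_m s0 w m * t m a) @ s --> \sum_m s w m * t m a).
have h1 : continuous (fun f : ptws_space2 R Omega M => f w) by exact: proj_continuous.
have hc : continuous (fun s0 : ptws_space2 R Omega M => \sum_m s0 w m * t m a).
  apply: (continuous_big (op := +%R)); first exact: add_continuous.
  move=> m _.
  have h2 : continuous (fun g : ptws_space R M => g m) by exact: proj_continuous.
  move=> s1; apply: (continuousM (s := fun s0 : ptws_space2 R Omega M => s0 w m)).
    exact: (continuous_comp (h1 s1) (h2 (s1 w))).
  exact: cst_continuous.
exact: hc.
Qed.
Lemma canon_closed (S : set (Omega -> M -> R)) (t : M -> A -> R) :
  @closed (ptws_space2 R Omega M) S -> S `<=` @is_experiment R Omega M ->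
  @closed (ptws_space2 R Omega A) [set canonical_exp s t | s in S].
Proof.
move=> clS hS.
have cE := tychonoff (fun w : Omega => tychonoff (fun m : M => @segment_compact R 0 1)).
have cS : @compact (ptws_space2 R Omega M) S.
  apply: (subclosed_compact clS cE) => s Ss w m /=.
  have [h0 h1] := hS s Ss w.
  rewrite in_itv /= h0 /= -h1 (bigD1 m) //= lerDl sumr_ge0 //.
have := continuous_compact (continuous_subspaceT (@canon_cont A t)) cS.
apply: compact_closed.
apply: hausdorff_product => w; apply: hausdorff_product => a.
exact: Rhausdorff.
Qed.
End S.

Theorem lemma1 (R : realType) (Omega A M : finType) (P : set (Omega -> R))
    (us ur : A -> Omega -> R) (Sigma : set (Omega -> M -> R)) (tau : M -> A -> R) :
  prior_set P ->
  ambiguous_experiment Sigma ->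
  best_response P Sigma ur tau ->
  let Sigma_star := [set canonical_exp s tau | s in Sigma] in
  ambiguous_experiment Sigma_star /\
  best_response P Sigma_star ur (@obedient R A) /\
  (forall s, Sigma s ->
     uP P us s tau = uP P us (canonical_exp s tau) (@obedient R A) /\
     uP P ur s tau = uP P ur (canonical_exp s tau) (@obedient R A)).
Proof.
move=> hP [ne [cl [cv sub]]] [ht br] Sstar.
split.
  split.
    by case: ne => s Ss; exists (canonical_exp s tau); exists s.
  split; first exact: canon_closed.
  split; first exact: canon_convex.
  by move=> _ [s Ss <-]; apply: canon_experiment => //; exact: sub.
split.
  split; first exact: obedient_strategy.
  move=> t' ht'.
  have key : forall t'' : A -> A -> R,
      USig P Sstar ur t'' = USig P Sigma ur (@comp_st R A M tau t'').
    move=> t''; rewrite /USig; congr inf; apply/seteqP; split.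
      by move=> _ [_ [s Ss <-] <-]; exists s => //; rewrite uP_canon.
    move=> _ [s Ss <-]; exists (canonical_exp s tau); first by exists s.
    by rewrite uP_canon.
  rewrite !key comp_obedient; apply: br; exact: (comp_strategy).
by move=> s Ss; rewrite !uP_canon !comp_obedient.
Qed.
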